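(* Let $X$ be a feasible solution of the General-Cost Convex Program and let $\alpha_j$ be the first arrival times produced by Continuous-Time Poisson Rounding from $X$. For any box $i\in[n]$, any time $\tau\ge 0$, and any thresholds $\theta_j\ge 0$ for $j\ne i$, $$\mathbf{E}\Big[\sum_{j\ne i:\,\alpha_j<\tau}c_j\ \Big|\ \forall j\ne i,\ \alpha_j>\theta_j\Big]\le\tau.$$
   Context: Boxes $[n]$ with costs $c_i>0$. Write $x_+=\max\{x,0\}$. A feasible solution of the General-Cost Convex Program is a family of non-decreasing functions $X_i:[0,\infty)\to[0,1]$, $i\in[n]$, with $\sum_{i\in[n]}\big(X_i(t)-X_i((t-c_i)_+)\big)\le 1$ for all $t\ge 0$. Continuous-Time Poisson Rounding: let $\bar x_i(t)=\frac1t\int_0^t\big(X_i(t')-X_i((t'-c_i)_+)\big)\,dt'$. Independently for each box $i$, arrivals of box $i$ form a non-homogeneous Poisson process in time $\tau\ge 0$ with rate $\frac1{c_i}\bar x_i(\tau/2)$; $\alpha_i$ is the first arrival time of box $i$ ($\infty$ if none). *)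

(* Defs.v *)
From HB Require Import structures.
From mathcomp Require Import all_boot all_order all_algebra.
From mathcomp Require Import all_classical all_reals all_analysis.
From mathcomp Require Import measurable_realfun.
Set Implicit Arguments. Unset Strict Implicit. Unset Printing Implicit Defensive.
Import Order.TTheory GRing.Theory Num.Theory.
Local Open Scope classical_set_scope.
Local Open Scope ring_scope.

Section GeneralCost.
Variable R : realType.
Variable n : nat.

(* Feasibility for the General-Cost Convex Program.  Functions are given
   on all of R but only their values on [0, oo) matter. *)
Definition gccp_feasible (c : 'I_n -> R) (X : 'I_n -> R -> R) : Prop :=
  (forall i s t, 0 <= s -> s <= t -> X i s <= X i t) /\
  (forall i t, 0 <= t -> 0 <= X i t <= 1) /\
  (forall t, 0 <= t ->
     \sum_(i < n) (X i t - X i (Num.max (t - c i) 0)) <= 1).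

Definition xbar (c : 'I_n -> R) (X : 'I_n -> R -> R) (i : 'I_n) (t : R) : R :=
  t^-1 * Rintegral lebesgue_measure `[0, t]
           (fun t' => X i t' - X i (Num.max (t' - c i) 0)).

Definition poisson_rate (c : 'I_n -> R) (X : 'I_n -> R -> R) (i : 'I_n) (tau : R) : R :=
  (c i)^-1 * xbar c X i (tau / 2).

Definition cum_rate (c : 'I_n -> R) (X : 'I_n -> R -> R) (i : 'I_n) (t : R) : R :=
  Rintegral lebesgue_measure `[0, t] (poisson_rate c X i).
End GeneralCost.

(* Continuous-Time Poisson Rounding: alpha i is the first arrival time
   ( +oo if none ) of an independent non-homogeneous Poisson process with
   the rate above. *)
Definition poisson_rounding (R : realType) (n : nat) (d : measure_display)
  (T : measurableType d) (P : probability T R)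
  (c : 'I_n -> R) (X : 'I_n -> R -> R) (alpha : 'I_n -> T -> \bar R) : Prop :=
  (forall i, measurable_fun setT (alpha i)) /\
  (forall i t, 0 <= t ->
     P [set w | (t%:E < alpha i w)%E] = (expR (- cum_rate c X i t))%:E) /\
  (forall B : 'I_n -> set (\bar R), (forall j, measurable (B j)) ->
     P (\bigcap_(j in [set: 'I_n]) (alpha j @^-1` B j))
       = (\prod_(j < n) P (alpha j @^-1` B j))%E).

Definition cond_exp_event (R : realType) (d : measure_display)
  (T : measurableType d) (P : probability T R) (A : set T) (Y : T -> \bar R)
  : \bar R :=
  ((\int[P]_(w in A) Y w) * ((fine (P A))^-1)%:E)%E.

(* Main.v *)
Require Import Defs.
From HB Require Import structures.
From mathcomp Require Import all_boot all_order all_algebra.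
From mathcomp Require Import all_classical all_reals all_analysis.
From mathcomp Require Import measurable_realfun.
From mathcomp Require Import ring lra.
Import Order.TTheory GRing.Theory Num.Theory.
Local Open Scope classical_set_scope.
Local Open Scope ring_scope.

Section Analytic.
Variables (R : realType) (n : nat) (c : 'I_n -> R) (X : 'I_n -> R -> R).
Hypotheses (hc : forall i, 0 < c i) (hX : gccp_feasible c X).
Local Notation mu := (@lebesgue_measure R).

Definition gf j t := X j t - X j (Num.max (t - c j) 0).

Lemma gf_bnd j t : 0 <= t -> 0 <= gf j t <= 1.
Proof.
move=> t0; case: hX => mon [bd _].
have m0 : 0 <= Num.max (t - c j) 0 by rewrite le_max lexx orbT.
have mt : Num.max (t - c j) 0 <= t.
  by rewrite ge_max t0 andbT gerBl ltW.
have := mon j _ _ m0 mt; have /andP[_ h1] := bd j t t0.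
have /andP[h2 _] := bd j _ m0.
rewrite /gf subr_ge0 => ->/=; rewrite lerBlDr; apply: (le_trans h1).
by rewrite lerDl.
Qed.

Lemma mon_ext (f : R -> R) : (forall s t, 0 <= s -> s <= t -> f s <= f t) ->
  {homo (fun x => f (Num.max x 0)) : x y / x <= y}.
Proof.
move=> mf x y xy; apply: mf; first by rewrite le_max lexx orbT.
by rewrite ge_max !le_max xy lexx !orbT.
Qed.

Lemma meas_mon (f : R -> R) (t : R) : (forall s t, 0 <= s -> s <= t -> f s <= f t) ->
  measurable_fun `[0, t] f.
Proof.
move=> mf.
have h : measurable_fun `[0, t] (fun x => f (Num.max x 0)).
  by apply: nondecreasing_measurable => //; exact: mon_ext.
apply: eq_measurable_fun h.
move=> x; rewrite inE /= in_itv /= => /andP[x0 _].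
by rewrite (max_idPl x0).
Qed.

Lemma gf_meas j (t : R) : measurable_fun `[0, t] (gf j).
Proof.
case: hX => mon _.
apply: measurable_funB; first exact: meas_mon _ (mon j).
apply: (meas_mon (fun s => X j (Num.max (s - c j) 0))).
move=> s u s0 su; apply: mon; first by rewrite le_max lexx orbT.
by rewrite ge_max !le_max lerD2r su lexx !orbT.
Qed.

Lemma itv_fin (t : R) : (mu `[0%R, t] < +oo)%E.
Proof.
rewrite (@lebesgue_measure_itv R `[0, t]) /=.
by case: ifP => _; rewrite ?ltry // -EFinD ltry.
Qed.

Lemma mu_itv (t : R) : 0 <= t -> mu `[0%R, t] = t%:E.
Proof.
move=> t0; rewrite (@lebesgue_measure_itv R `[0, t]) /=.
case: ifP => [_|]; first by rewrite -EFinD subr0.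
by rewrite lte_fin lt_neqAle t0 andbT => /negbFE/eqP <-.
Qed.

Lemma int_bnd (f : R -> R) (t M : R) : measurable_fun `[0, t] f ->
  (forall x, 0 <= x <= t -> `|f x| <= M) -> mu.-integrable `[0, t] (EFin \o f).
Proof.
move=> mf hb; apply: measurable_bounded_integrable => //.
  exact: itv_fin.
exists M; split; first by rewrite num_real.
move=> y My x; rewrite /= in_itv /= => hx.
by apply: (le_trans (hb x hx)); rewrite ltW.
Qed.

Lemma gf_int j (t : R) : mu.-integrable `[0, t] (EFin \o gf j).
Proof.
apply: (int_bnd _ _ 1); first exact: gf_meas.
move=> x /andP[x0 _]; have /andP[h1 h2] := gf_bnd j _ x0.
by rewrite ger0_norm.
Qed.


Lemma Rint_sum (D : set R) (mD : measurable D) (F : 'I_n -> R -> R) (P : pred 'I_n) :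
  (forall j, mu.-integrable D (EFin \o F j)) ->
  \int[mu]_(x in D) (\sum_(j < n | P j) F j x) =
  \sum_(j < n | P j) \int[mu]_(x in D) F j x.
Proof.
move=> hF; rewrite /Rintegral.
rewrite (_ : (\int[mu]_(x in D) (\sum_(j < n | P j) F j x)%:E)%E =
  (\int[mu]_(x in D) (\sum_(j < n | P j) (EFin \o F j) x))%E); last first.
  by apply: eq_integral => x _ /=; rewrite -sumEFin.
rewrite integral_sum // -sum_fine //.
by move=> j _; exact: integrable_fin_num.
Qed.

Definition Gf j (t : R) := \int[mu]_(x in `[0, t]) gf j x.

Lemma Gf_ge0 j t : 0 <= Gf j t.
Proof.
apply: Rintegral_ge0 => x; rewrite /= in_itv /= => /andP[x0 _].
by have /andP[] := gf_bnd j _ x0.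
Qed.

Lemma Gf_sum t : 0 <= t -> \sum_(j < n) Gf j t <= t.
Proof.
move=> t0; rewrite /Gf -Rint_sum //; last by move=> j; exact: gf_int.
apply: (@le_trans _ _ (\int[mu]_(x in `[0, t]) (cst 1 x))).
  apply: le_Rintegral => //.
  - have hs : mu.-integrable `[0, t] (fun x => \sum_(j < n) (EFin \o gf j) x).
      by apply: integrable_sum => // j _; exact: gf_int.
    by apply: eq_integrable hs => // x _ /=; rewrite sumEFin.
  - apply: (int_bnd _ _ 1); first exact: measurable_cst.
    by move=> x _; rewrite normr1.
  - move=> x; rewrite /= in_itv /= => /andP[x0 _].
    by case: hX => _ [_ /(_ x x0)].
rewrite Rintegral_cst // mul1r le_eqVlt; apply/orP; left; apply/eqP.
exact (f_equal fine (mu_itv t t0)).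
Qed.

Lemma Gf_le j t : 0 <= t -> Gf j t <= t.
Proof.
move=> t0; apply: le_trans (Gf_sum t t0).
rewrite (bigD1 j) //= lerDl; apply: sumr_ge0 => k _; exact: Gf_ge0.
Qed.

Lemma Gf_mono j s t : 0 <= s -> s <= t -> Gf j s <= Gf j t.
Proof.
move=> s0 st; apply: fine_le.
- by apply: integrable_fin_num => //; exact: gf_int.
- by apply: integrable_fin_num => //; exact: gf_int.
apply: ge0_subset_integral => //.
- by have /measurable_EFinP := gf_meas j t.
- move=> x; rewrite /= in_itv /= => /andP[x0 _]; rewrite lee_fin.
  by have /andP[] := gf_bnd j _ x0.
- move=> x; rewrite /= !in_itv /= => /andP[-> xs] /=.
  exact: le_trans xs st.
Qed.

Lemma xbarE j t : xbar c X j t = t^-1 * Gf j t.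
Proof. by []. Qed.

Lemma xbar_ge0 j t : 0 <= t -> 0 <= xbar c X j t.
Proof. by move=> t0; rewrite xbarE mulr_ge0 ?invr_ge0 ?Gf_ge0. Qed.

Lemma xbar_sum t : 0 <= t -> \sum_(j < n) xbar c X j t <= 1.
Proof.
move=> t0; under eq_bigr do rewrite xbarE.
rewrite -mulr_sumr; have [->|tn0] := eqVneq t 0; first by rewrite invr0 mul0r.
apply: (@le_trans _ _ (t^-1 * t)); last by rewrite mulVf.
by rewrite ler_wpM2l ?invr_ge0 ?Gf_sum.
Qed.

Lemma xbar_le1 j t : 0 <= t -> xbar c X j t <= 1.
Proof.
move=> t0; apply: le_trans (xbar_sum t t0).
rewrite (bigD1 j) //= lerDl; apply: sumr_ge0 => k _; exact: xbar_ge0.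
Qed.

Lemma xbar_meas j (tau : R) : measurable_fun `[0, tau] (fun s => xbar c X j (s / 2)).
Proof.
change (measurable_fun `[0, tau] (fun s : R => (s / 2)^-1 * Gf j (s / 2))).
apply: measurable_funM.
- have h : measurable_fun `[0, tau] (fun s : R => powR (s / 2) (-1)).
    apply: (measurable_funS measurableT) => //.
    exact (@measurableT_comp _ _ _ _ _ _ (fun x : R => powR x (-1)) _ (fun x : R => x * 2^-1) (measurable_powR _) (mulrr_measurable _)).
  apply: eq_measurable_fun h => x; rewrite inE /= in_itv /= => /andP[x0 _].
  by rewrite powR_inv1 // divr_ge0.
- apply: (meas_mon (fun s => Gf j (s / 2))) => s u s0 su.
  by apply: Gf_mono; rewrite ?divr_ge0 ?ler_pM2r.
Qed.


Lemma rate_ge0 j s : 0 <= s -> 0 <= poisson_rate c X j s.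
Proof.
move=> s0; rewrite /poisson_rate; apply: mulr_ge0; first by rewrite invr_ge0 ltW ?hc.
by apply: xbar_ge0; rewrite divr_ge0.
Qed.

Lemma cum_ge0 j t : 0 <= cum_rate c X j t.
Proof.
apply: Rintegral_ge0 => x; rewrite /= in_itv /= => /andP[x0 _].
exact: rate_ge0.
Qed.

Lemma xb_int j (tau : R) :
  mu.-integrable `[0, tau] (EFin \o (fun s => xbar c X j (s / 2))).
Proof.
apply: (int_bnd _ _ 1); first exact: xbar_meas.
move=> x /andP[x0 _]; have x20 : 0 <= x / 2 by rewrite divr_ge0.
by rewrite ger0_norm ?xbar_ge0 ?xbar_le1.
Qed.

Lemma rate_int j (tau : R) :
  mu.-integrable `[0, tau] (EFin \o poisson_rate c X j).
Proof.
apply: (int_bnd _ _ (c j)^-1).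
  change (measurable_fun `[0, tau] (fun s : R => (c j)^-1 * xbar c X j (s / 2))).
  by apply: measurable_funM; [exact: measurable_cst|exact: xbar_meas].
move=> x /andP[x0 _]; have x20 : 0 <= x / 2 by rewrite divr_ge0.
rewrite ger0_norm ?rate_ge0 // /poisson_rate.
by rewrite ler_piMr ?xbar_le1 // invr_ge0 ltW ?hc.
Qed.

Lemma cum_sum (tau : R) : 0 <= tau -> \sum_(j < n) c j * cum_rate c X j tau <= tau.
Proof.
move=> t0.
have e j : c j * cum_rate c X j tau = \int[mu]_(s in `[0, tau]) xbar c X j (s / 2).
  rewrite /cum_rate -RintegralZl //; last exact: rate_int.
  apply: eq_Rintegral => s _; rewrite /poisson_rate mulrA mulfV ?mul1r //.
  by rewrite gt_eqF ?hc.
rewrite (eq_bigr _ (fun j _ => e j)) -Rint_sum //; last by move=> j; exact: xb_int.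
apply: (@le_trans _ _ (\int[mu]_(x in `[0, tau]) (cst 1 x))).
  apply: le_Rintegral => //.
  - have hs : mu.-integrable `[0, tau]
        (fun x => \sum_(j < n) (EFin \o (fun s => xbar c X j (s / 2))) x).
      by apply: integrable_sum => // j _; exact: xb_int.
    by apply: eq_integrable hs => // x _ /=; rewrite sumEFin.
  - apply: (int_bnd _ _ 1); first exact: measurable_cst.
    by move=> x _; rewrite normr1.
  - move=> x; rewrite /= in_itv /= => /andP[x0 _].
    by apply: xbar_sum; rewrite divr_ge0.
rewrite Rintegral_cst // mul1r le_eqVlt; apply/orP; left; apply/eqP.
exact (f_equal fine (mu_itv tau t0)).
Qed.

End Analytic.

Lemma exp_ineq (R : realType) (a b : R) : 0 <= a -> 0 <= b ->
  expR (- a) - expR (- b) <= expR (- a) * b.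
Proof.
move=> a0 b0.
have h1 : expR (- b) = expR (- a) * expR (a - b) by rewrite -expRD; congr expR; ring.
have h2 : 1 + (a - b) <= expR (a - b) := expR_ge1Dx _.
have ea : 0 < expR (- a) := expR_gt0 _.
rewrite h1; apply: (@le_trans _ _ (expR (- a) * (b - a))).
  rewrite -[X in X - _]mulr1 -mulrBr; apply: ler_wpM2l; [exact: ltW | lra].
apply: ler_wpM2l; [exact: ltW | lra].
Qed.

Section Prob.
Variables (R : realType) (n : nat) (d : measure_display) (T : measurableType d).
Variables (P : probability T R) (c : 'I_n -> R) (X : 'I_n -> R -> R).
Variable alpha : 'I_n -> T -> \bar R.
Hypotheses (hc : forall i, 0 < c i) (hX : gccp_feasible c X)
  (halpha : poisson_rounding P c X alpha).

Lemma mpre k (Y : set (\bar R)) : measurable Y -> measurable (alpha k @^-1` Y).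
Proof.
case: halpha => hm _ mY; rewrite -[X in measurable X]setTI.
exact: (hm k measurableT _ mY).
Qed.

Local Open Scope ereal_scope.

Lemma surv_ineq j (th tau : R) : (0 <= th)%R -> (0 <= tau)%R ->
  (forall t, 0 <= cum_rate c X j t)%R ->
  P (alpha j @^-1` `](th%:E), tau%:E[) <=
  P (alpha j @^-1` `]th%:E, +oo[) * (cum_rate c X j tau)%:E.
Proof.
move=> th0 tau0 hL; have L0 := hL tau; case: halpha => _ [hs _].
have [tth|tht] := leP tau th.
  rewrite (_ : _ @^-1` _ = set0) ?measure0; last first.
    apply/seteqP; split => w //=; rewrite in_itv /= => /andP[h1 h2].
    by have := lt_trans h1 h2; rewrite lte_fin ltNge tth.
  by apply: mule_ge0 => //; rewrite lee_fin.
set C := alpha j @^-1` _; set B := alpha j @^-1` _.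
set D := alpha j @^-1` `]tau%:E, +oo[.
have mC : measurable C by apply: mpre; exact: emeasurable_itv.
have mD : measurable D by apply: mpre; exact: emeasurable_itv.
have mB : measurable B by apply: mpre; exact: emeasurable_itv.
have hB : P B = (expR (- cum_rate c X j th))%:E by rewrite /B preimage_itvoy hs.
have hD : P D = (expR (- cum_rate c X j tau))%:E by rewrite /D preimage_itvoy hs.
have hU : P C + P D <= P B.
  rewrite -measureU //; last first.
    apply/seteqP; split => w //=; rewrite /C /D /= !in_itv /= => -[/andP[_ h1] /andP[h2 _]].
    by have := lt_trans h1 h2; rewrite ltxx.
  apply: le_measure; rewrite ?inE //; first exact: measurableU.
  move=> w; rewrite /B /C /D /= !in_itv /= => -[/andP[-> _]//|/andP[h _]].
  by rewrite (lt_trans _ h) // lte_fin.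
have fC : P C \is a fin_num by exact: fin_num_measure.
have hPC : P C = (fine (P C))%:E by rewrite fineK.
rewrite hPC hB -EFinM lee_fin.
move: hU; rewrite hPC hB hD -EFinD lee_fin => hU.
have hth := hL th.
apply: (le_trans _ (exp_ineq _ _ _ hth L0)).
rewrite lerBrDr; exact: hU.
Qed.


Definition Bf (i : 'I_n) (theta : 'I_n -> R) k : set (\bar R) :=
  if k == i then setT else `](theta k)%:E, +oo[%classic.

Definition Aset (i : 'I_n) (theta : 'I_n -> R) :=
  [set w | forall j, j != i -> ((theta j)%:E < alpha j w)%E].

Lemma mBf i theta k : measurable (Bf i theta k).
Proof. by rewrite /Bf; case: ifP => _; [exact: measurableT|exact: emeasurable_itv]. Qed.

Lemma A_eq i theta :
  Aset i theta = \bigcap_(k in [set: 'I_n]) alpha k @^-1` Bf i theta k.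
Proof.
apply/seteqP; split => w /=.
- move=> hw k _; rewrite /Bf; case: eqP => [//|/eqP kn] /=.
  by rewrite in_itv /= andbT; exact: hw.
- move=> hw k kn; have := hw k I; rewrite /Bf (negbTE kn) /= in_itv /= andbT.
  by [].
Qed.

Lemma mA i theta : measurable (Aset i theta).
Proof.
rewrite A_eq; apply: fin_bigcap_measurable; first exact: finite_finset.
move=> k _; apply: mpre; exact: mBf.
Qed.

Lemma key (i j : 'I_n) (theta : 'I_n -> R) (tau : R)
  (htheta : forall j, j != i -> (0 <= theta j)%R) (tau0 : (0 <= tau)%R) (ji : j != i)
  (hL : forall t, (0 <= cum_rate c X j t)%R) :
  P (alpha j @^-1` [set x | x < tau%:E] `&` Aset i theta) <=
  P (Aset i theta) * (cum_rate c X j tau)%:E.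
Proof.
have [hm [hs hind]] := halpha.
pose Bf' k := if k == j then `](theta j)%:E, tau%:E[%classic else Bf i theta k.
have mBf' k : measurable (Bf' k).
  by rewrite /Bf'; case: ifP => _; [exact: emeasurable_itv|exact: mBf].
have hAj : alpha j @^-1` [set x | x < tau%:E] `&` Aset i theta =
    \bigcap_(k in [set: 'I_n]) alpha k @^-1` Bf' k.
  apply/seteqP; split => w /=.
  - move=> [hlt hw] k _; rewrite /Bf' /Bf; case: eqP => [->|_] /=.
      by rewrite in_itv /= hlt andbT; exact: hw j ji.
    case: eqP => [//|/eqP kn] /=; rewrite in_itv /= andbT; exact: hw.
  - move=> hw; split.
      by have := hw j I; rewrite /Bf' eqxx /= in_itv /= => /andP[_ ->].
    move=> k kn; have := hw k I; rewrite /Bf'; case: eqP => [->|_].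
      by rewrite /= in_itv /= => /andP[].
    by rewrite /Bf (negbTE kn) /= in_itv /= andbT.
rewrite hAj A_eq !hind //; last by move=> k; exact: mBf.
rewrite (bigD1 j) //= [X in _ <= X * _](bigD1 j) //=.
have -> : \prod_(k < n | k != j) P (alpha k @^-1` Bf' k) =
    \prod_(k < n | k != j) P (alpha k @^-1` Bf i theta k).
  by apply: eq_bigr => k kj; rewrite /Bf' (negbTE kj).
have -> : Bf' j = `](theta j)%:E, tau%:E[%classic by rewrite /Bf' eqxx.
have -> : Bf i theta j = `](theta j)%:E, +oo[%classic by rewrite /Bf (negbTE ji).
rewrite muleAC; apply: lee_wpmul2r.
  by apply: prode_ge0 => k _; exact: measure_ge0.
exact: surv_ineq (htheta j ji) tau0 hL.
Qed.


Lemma main_bound (i : 'I_n) (tau : R) (theta : 'I_n -> R) (htau : (0 <= tau)%R)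
  (htheta : forall j, j != i -> (0 <= theta j)%R)
  (hL : forall j t, (0 <= cum_rate c X j t)%R)
  (hsum : (\sum_(j < n) c j * cum_rate c X j tau <= tau)%R) :
  cond_exp_event P (Aset i theta)
     (fun w => (\sum_(j < n | (j != i) && (alpha j w < tau%:E)%E) c j)%:E)
   <= tau%:E.
Proof.
have mAs := mA i theta.
set A := Aset i theta.
pose E j := alpha j @^-1` [set x | x < tau%:E].
have mE j : measurable (E j).
  by apply: mpre; rewrite -set_itvNyo; exact: emeasurable_itv.
pose cc j := if j != i then c j else 0%R.
have cc0 j : (0 <= cc j)%R by rewrite /cc; case: ifP => _ //; exact: ltW (hc j).
have hY w : (\sum_(j < n | (j != i) && (alpha j w < tau%:E)%E) c j)%:E =
    \sum_(j < n) (cc j * \1_(E j) w)%:E.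
  rewrite sumEFin; congr EFin; rewrite big_mkcond /=; apply: eq_bigr => j _.
  have eb : (w \in E j) = (alpha j w < tau%:E).
    by rewrite /E; apply/idP/idP => [/set_mem|h]; [by []|exact: mem_set].
  rewrite /cc indicE eb; case: (j != i) => /=; last by rewrite mul0r.
  by case: ifP => _; rewrite ?mulr1 ?mulr0.
have hmf j : measurable_fun setT (fun w => (cc j * \1_(E j) w)%:E).
  have h : measurable_fun setT (fun w => (cc j * \1_(E j) w)%R).
    by apply: measurable_funM; [exact: measurable_cst|exact: measurable_indic].
  by have /measurable_EFinP := h.
have hI j : \int[P]_(w in A) (cc j * \1_(E j) w)%:E = (cc j)%:E * P (E j `&` A).
  rewrite (eq_integral (fun w => (cc j)%:E * (\1_(E j) w)%:E)); last first.
    by move=> w _; rewrite EFinM.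
  rewrite ge0_integralZl_EFin //; first by rewrite integral_indic.
  have h : measurable_fun A (fun w => (\1_(E j) w : R)) by exact: measurable_indic.
  by have /measurable_EFinP := h.
have hPA : P A = (fine (P A))%:E by rewrite fineK // fin_num_measure.
set pA := fine (P A).
have pA0 : (0 <= pA)%R by rewrite fine_ge0 // measure_ge0.
have hbound : \int[P]_(w in A) (\sum_(j < n) (cc j * \1_(E j) w)%:E) <= (pA * tau)%:E.
  rewrite ge0_integral_sum //; first last.
  - by move=> j w _; rewrite lee_fin mulr_ge0 // indicE ler0n.
  - by move=> j; apply: measurable_funS (hmf j).
  rewrite (eq_bigr _ (fun j _ => hI j)).
  apply: (@le_trans _ _ (\sum_(j < n) (cc j * (pA * cum_rate c X j tau))%:E)).
    apply: lee_sum => j _; rewrite /cc; case: ifP => ji; last by rewrite mul0e mul0r.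
    rewrite EFinM; apply: lee_wpmul2l; first by rewrite lee_fin ltW.
    by rewrite EFinM -hPA; exact: key.
  rewrite sumEFin lee_fin.
  under eq_bigr do rewrite mulrCA.
  rewrite -mulr_sumr ler_wpM2l //; apply: le_trans hsum; apply: ler_sum => j _.
  rewrite /cc; case: ifP => _ //; rewrite mul0r mulr_ge0 ?hL //; exact: ltW.
rewrite /cond_exp_event -/A -/pA.
rewrite (eq_integral (fun w => \sum_(j < n) (cc j * \1_(E j) w)%:E)); last by move=> w _; exact: hY.
apply: (@le_trans _ _ ((pA * tau)%:E * (pA^-1)%:E)).
  by apply: lee_wpmul2r; [rewrite lee_fin invr_ge0|exact: hbound].
rewrite -EFinM lee_fin; have [->|pn0] := eqVneq pA 0%R; first by rewrite !mul0r.
by rewrite mulrAC mulfV // mul1r.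
Qed.

End Prob.

Theorem lemma4p4 (R : realType) (n : nat) (d : measure_display)
  (T : measurableType d) (P : probability T R)
  (c : 'I_n -> R) (X : 'I_n -> R -> R) (alpha : 'I_n -> T -> \bar R)
  (hc : forall i, 0 < c i)
  (hX : gccp_feasible c X)
  (halpha : poisson_rounding P c X alpha)
  (i : 'I_n) (tau : R) (htau : 0 <= tau)
  (theta : 'I_n -> R) (htheta : forall j, j != i -> 0 <= theta j) :
  (cond_exp_event P
     [set w | forall j, j != i -> ((theta j)%:E < alpha j w)%E]
     (fun w => (\sum_(j < n | (j != i) && (alpha j w < tau%:E)%E) c j)%:E)
   <= tau%:E)%E.
Proof.
exact (@main_bound _ _ _ _ _ _ _ _ hc halpha _ _ _ htau htheta (@cum_ge0 _ _ _ _ hc hX) (@cum_sum _ _ _ _ hc hX _ htau)).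
Qed.
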